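(* There is an absolute constant $K$ such that for every finite program $\Omega$ with weight constraints in which all weights $w_i$ are integers, the number of weight atoms (atoms of the forms $q_{w\le S}$, $q_{w<S}$) occurring in $[\Omega]^{nn}$ is at most $K\sum_C (L(C)+1)(W(C)+1)$, the sum ranging over all weight constraints $C$ occurring in $\Omega$; in the paper's notation, this number is $O\big(\sum_C L(C)\cdot W(C)\big)$.
   Context: A rule element is a literal $l$ or $\mathit{not}\ l$ (literals are atoms or classically negated atoms $\neg a$). A weight constraint $C$ is $L\le\{c_1=w_1,\dots,c_m=w_m\}\le U$ with $L,U$ reals or $\pm\infty$, rule elements $c_i$ ($m\ge0$), nonnegative real weights $w_i$; its length is $L(C)=m$ and its weight is $W(C)=w_1+\dots+w_m$. A rule with weight constraints is $C_0\leftarrow C_1,\dots,C_n$; the rule elements of $C_0$ are its positive/negative head elements; a program with weight constraints is a set of such rules. Nonnested translation. For each literal $l$ there is a new atom $q_{\mathit{not}\,l}$, and for each value $w$ and each expression $S=\{c_1=w_1,\dots,c_m=w_m\}$ new atoms $q_{w\le S}$ and $q_{w<S}$ (weight atoms). For $m>0$, $S'=\{c_1=w_1,\dots,c_{m-1}=w_{m-1}\}$. A program $\Pi$ (set of rules $\mathit{Head}\leftarrow\mathit{Body}$, heads literals or $\bot$, bodies conjunctions of literals possibly prefixed by $\mathit{not}$) is closed if: for each atom $q_{w\le S}$ occurring in $\Pi$, $\Pi$ contains the fact $q_{w\le S}$ if $w\le0$, and the rules $q_{w\le S}\leftarrow q_{w\le S'}$ and $q_{w\le S}\leftarrow c_m,q_{w-w_m\le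 S'}$ if $0<w\le w_1+\dots+w_m$; for each atom $q_{w<S}$ occurring in $\Pi$, $\Pi$ contains the fact $q_{w<S}$ if $w<0$, and the rules $q_{w<S}\leftarrow q_{w<S'}$ and $q_{w<S}\leftarrow c_m,q_{w-w_m<S'}$ if $0\le w<w_1+\dots+w_m$. $[L\le S\le U]^{nn}$ is the conjunction $q_{L\le S},\mathit{not}\,q_{U<S}$. $[\Omega]^{nn}$ is the smallest closed program containing, for every rule $L_0\le S_0\le U_0\leftarrow C_1,\dots,C_n$ of $\Omega$ and each of its positive head elements $l$, the rules $q_{\mathit{not}\,l}\leftarrow\mathit{not}\,l$ and $l\leftarrow\mathit{not}\,q_{\mathit{not}\,l},[C_1]^{nn},\dots,[C_n]^{nn}$, and the rules $\bot\leftarrow\mathit{not}\,q_{L_0\le S_0},[C_1]^{nn},\dots,[C_n]^{nn}$ and $\bot\leftarrow q_{U_0<S_0},[C_1]^{nn},\dots,[C_n]^{nn}$. *)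

(* Defs.v *)
From Stdlib Require Import Reals List.
From Coquelicot Require Import Rbar.
Import ListNotations.
Open Scope R_scope.

Set Implicit Arguments.

Inductive literal (A : Type) : Type :=
| LPos : A -> literal A
| LNeg : A -> literal A.

Inductive rule_elem (A : Type) : Type :=
| ELit : literal A -> rule_elem A
| ENot : literal A -> rule_elem A.

Definition wexpr (A : Type) := list (rule_elem A * R).

Record wconstraint (A : Type) : Type := WC {
  wc_lo : Rbar; wc_expr : wexpr A; wc_hi : Rbar }.

Record wrule (A : Type) : Type := WR {
  wr_head : wconstraint A; wr_body : list (wconstraint A) }.

Definition wprogram (A : Type) := list (wrule A).

Definition wsum (A : Type) (S : wexpr A) : R :=
  fold_right (fun p acc => snd p + acc) 0 S.

Definition cLen (A : Type) (C : wconstraint A) : nat := length (wc_expr C).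
Definition cWeight (A : Type) (C : wconstraint A) : R := wsum (wc_expr C).

Definition occurs_constraint (A : Type) (Om : wprogram A) (C : wconstraint A) : Prop :=
  exists r, In r Om /\ (C = wr_head r \/ In C (wr_body r)).

Inductive natom (A : Type) : Type :=
| Orig : A -> natom A
| QNot : literal A -> natom A
| QLe : Rbar -> wexpr A -> natom A
| QLt : Rbar -> wexpr A -> natom A.

Definition is_weight_atom (A : Type) (x : natom A) : Prop :=
  exists w S, x = QLe w S \/ x = QLt w S.

Inductive nlit (A : Type) : Type :=
| NPos : natom A -> nlit A
| NNeg : natom A -> nlit A.

Definition nlit_atom (A : Type) (l : nlit A) : natom A :=
  match l with NPos x => x | NNeg x => x end.

Inductive nbelem (A : Type) : Type :=
| BLit : nlit A -> nbelem A
| BNot : nlit A -> nbelem A.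

Definition nbelem_atom (A : Type) (b : nbelem A) : natom A :=
  match b with BLit l => nlit_atom l | BNot l => nlit_atom l end.

(** rule Head <- Body; head [None] stands for bottom *)
Record nrule (A : Type) : Type := NR {
  nr_head : option (nlit A); nr_body : list (nbelem A) }.

Definition nprogram (A : Type) := nrule A -> Prop.

Definition occurs_in_rule (A : Type) (x : natom A) (r : nrule A) : Prop :=
  (exists l, nr_head r = Some l /\ nlit_atom l = x) \/
  (exists b, In b (nr_body r) /\ nbelem_atom b = x).

Definition occurs_in_prog (A : Type) (x : natom A) (P : nprogram A) : Prop :=
  exists r, P r /\ occurs_in_rule x r.

Definition lit_emb (A : Type) (l : literal A) : nlit A :=
  match l with LPos a => NPos (Orig a) | LNeg a => NNeg (Orig a) end.

Definition elem_emb (A : Type) (c : rule_elem A) : nbelem A :=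
  match c with ELit l => BLit (lit_emb l) | ENot l => BNot (lit_emb l) end.

Definition fact (A : Type) (x : natom A) : nrule A := NR (Some (NPos x)) [].

Definition closed_prog (A : Type) (P : nprogram A) : Prop :=
  (forall w S, occurs_in_prog (QLe w S) P ->
     (Rbar_le w (Finite 0) -> P (fact (QLe w S))) /\
     (forall S' c wm, S = S' ++ [(c, wm)] ->
        Rbar_lt (Finite 0) w -> Rbar_le w (Finite (wsum S)) ->
        P (NR (Some (NPos (QLe w S))) [BLit (NPos (QLe w S'))]) /\
        P (NR (Some (NPos (QLe w S)))
              [elem_emb c; BLit (NPos (QLe (Rbar_minus w (Finite wm)) S'))]))) /\
  (forall w S, occurs_in_prog (QLt w S) P ->
     (Rbar_lt w (Finite 0) -> P (fact (QLt w S))) /\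
     (forall S' c wm, S = S' ++ [(c, wm)] ->
        Rbar_le (Finite 0) w -> Rbar_lt w (Finite (wsum S)) ->
        P (NR (Some (NPos (QLt w S))) [BLit (NPos (QLt w S'))]) /\
        P (NR (Some (NPos (QLt w S)))
              [elem_emb c; BLit (NPos (QLt (Rbar_minus w (Finite wm)) S'))]))).

Definition nn_constraint (A : Type) (C : wconstraint A) : list (nbelem A) :=
  [BLit (NPos (QLe (wc_lo C) (wc_expr C)));
   BNot (NPos (QLt (wc_hi C) (wc_expr C)))].

Definition nn_body (A : Type) (Cs : list (wconstraint A)) : list (nbelem A) :=
  flat_map (@nn_constraint A) Cs.

Definition base_rules (A : Type) (Om : wprogram A) (r : nrule A) : Prop :=
  exists rw, In rw Om /\
   let C0 := wr_head rw in
   let B := nn_body (wr_body rw) in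
   ((exists l wl, In (ELit l, wl) (wc_expr C0) /\
       (r = NR (Some (NPos (QNot l))) [BNot (lit_emb l)] \/
        r = NR (Some (lit_emb l)) (BNot (NPos (QNot l)) :: B))) \/
    r = NR None (BNot (NPos (QLe (wc_lo C0) (wc_expr C0))) :: B) \/
    r = NR None (BLit (NPos (QLt (wc_hi C0) (wc_expr C0))) :: B)).

(** [Omega]^nn: the smallest closed program containing the base rules
    (intersection of all such programs; closedness is preserved by intersections) *)
Definition nn_translation (A : Type) (Om : wprogram A) : nprogram A :=
  fun r => forall P : nprogram A,
    closed_prog P -> (forall r', base_rules Om r' -> P r') -> P r.

(* Main.v *)
Require Import Defs.
From Stdlib Require Import Reals List.
From Coquelicot Require Import Rbar.
From Stdlib Require Import Lia Lra ZArith.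
Import ListNotations.
Open Scope R_scope.
Set Implicit Arguments.

Definition rsub (w : Rbar) (j : nat) : Rbar := Rbar_minus w (Finite (INR j)).

Lemma rsub0 w : rsub w 0 = w.
Proof. destruct w; unfold rsub, Rbar_minus; simpl; auto. f_equal; ring. Qed.

Lemma rsub_add w j m : Rbar_minus (rsub w j) (Finite (INR m)) = rsub w (j + m).
Proof.
  destruct w; unfold rsub, Rbar_minus; simpl; auto.
  rewrite plus_INR. f_equal; ring.
Qed.

Definition goodA (A : Type) (cs : list (wconstraint A)) (x : natom A) : Prop :=
  exists C S S'' j, In C cs /\ S ++ S'' = wc_expr C /\ INR j <= wsum S'' /\
    (x = QLe (rsub (wc_lo C) j) S \/ x = QLt (rsub (wc_hi C) j) S).

Lemma wsum_app A (l1 l2 : wexpr A) : wsum (l1 ++ l2) = wsum l1 + wsum l2.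
Proof. induction l1; simpl; [ring|]. unfold wsum in *; simpl. rewrite IHl1; ring. Qed.

Lemma wsum_nonneg A (l : wexpr A) : (forall p, In p l -> 0 <= snd p) -> 0 <= wsum l.
Proof.
  induction l; simpl; intros H; [lra|].
  unfold wsum in *; simpl.
  assert (0 <= snd a) by (apply H; auto).
  assert (0 <= fold_right (fun p acc => snd p + acc) 0 l) by (apply IHl; auto). lra.
Qed.

Lemma nat_of_weight (w : R) : 0 <= w -> (exists z : Z, w = IZR z) -> exists m, w = INR m.
Proof.
  intros H [z ->]. exists (Z.to_nat z). rewrite INR_IZR_INZ.
  assert (0 <= z)%Z by (apply le_IZR; auto). rewrite Z2Nat.id; auto.
Qed.

Section S.
Variable A : Type.
Variable Om : wprogram A.
Variable cs : list (wconstraint A).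
Hypothesis Hw : forall C, occurs_constraint Om C ->
       forall c w, In (c, w) (wc_expr C) -> 0 <= w /\ exists z : Z, w = IZR z.
Hypothesis Hcs : forall C, In C cs <-> occurs_constraint Om C.

Lemma good_step_same w S S' c wm :
  goodA cs (QLe w S) -> S = S' ++ [(c, wm)] -> goodA cs (QLe w S').
Proof.
  intros [C [S0 [S'' [j [HC [HE [Hj [H|H]]]]]]]] ->; try discriminate.
  injection H; intros; subst.
  assert (HwC := Hw (proj1 (Hcs C) HC)).
  assert (Hin : In (c, wm) (wc_expr C)) by (rewrite <- HE; apply in_or_app; left; apply in_or_app; right; simpl; auto).
  destruct (HwC _ _ Hin) as [Hnn _].
  exists C, S', ((c, wm) :: S''), j. repeat split; auto.
  - rewrite <- HE, <- app_assoc; reflexivity.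
  - unfold wsum in *; simpl. lra.
Qed.

Lemma good_step_same_lt w S S' c wm :
  goodA cs (QLt w S) -> S = S' ++ [(c, wm)] -> goodA cs (QLt w S').
Proof.
  intros [C [S0 [S'' [j [HC [HE [Hj [H|H]]]]]]]] ->; try discriminate.
  injection H; intros; subst.
  assert (HwC := Hw (proj1 (Hcs C) HC)).
  assert (Hin : In (c, wm) (wc_expr C)) by (rewrite <- HE; apply in_or_app; left; apply in_or_app; right; simpl; auto).
  destruct (HwC _ _ Hin) as [Hnn _].
  exists C, S', ((c, wm) :: S''), j. repeat split; auto.
  - rewrite <- HE, <- app_assoc; reflexivity.
  - unfold wsum in *; simpl. lra.
Qed.

Lemma good_step w S S' c wm :
  goodA cs (QLe w S) -> S = S' ++ [(c, wm)] ->
  goodA cs (QLe (Rbar_minus w (Finite wm)) S').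
Proof.
  intros [C [S0 [S'' [j [HC [HE [Hj [H|H]]]]]]]] ->; try discriminate.
  injection H; intros; subst.
  assert (HwC := Hw (proj1 (Hcs C) HC)).
  assert (Hin : In (c, wm) (wc_expr C)) by (rewrite <- HE; apply in_or_app; left; apply in_or_app; right; simpl; auto).
  destruct (HwC _ _ Hin) as [Hnn Hz].
  destruct (nat_of_weight Hnn Hz) as [m ->].
  exists C, S', ((c, INR m) :: S''), (j + m)%nat. repeat split; auto.
  - rewrite <- HE, <- app_assoc; reflexivity.
  - unfold wsum in *; simpl. rewrite plus_INR. lra.
  - left. rewrite rsub_add. reflexivity.
Qed.

Lemma good_step_lt w S S' c wm :
  goodA cs (QLt w S) -> S = S' ++ [(c, wm)] ->
  goodA cs (QLt (Rbar_minus w (Finite wm)) S').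
Proof.
  intros [C [S0 [S'' [j [HC [HE [Hj [H|H]]]]]]]] ->; try discriminate.
  injection H; intros; subst.
  assert (HwC := Hw (proj1 (Hcs C) HC)).
  assert (Hin : In (c, wm) (wc_expr C)) by (rewrite <- HE; apply in_or_app; left; apply in_or_app; right; simpl; auto).
  destruct (HwC _ _ Hin) as [Hnn Hz].
  destruct (nat_of_weight Hnn Hz) as [m ->].
  exists C, S', ((c, INR m) :: S''), (j + m)%nat. repeat split; auto.
  - rewrite <- HE, <- app_assoc; reflexivity.
  - unfold wsum in *; simpl. rewrite plus_INR. lra.
  - right. rewrite rsub_add. reflexivity.
Qed.

Lemma good_root C : In C cs ->
  goodA cs (QLe (wc_lo C) (wc_expr C)) /\ goodA cs (QLt (wc_hi C) (wc_expr C)).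
Proof.
  intros HC. split; exists C, (wc_expr C), [], 0%nat; repeat split; auto;
    try (rewrite app_nil_r; auto); try (simpl; unfold wsum; simpl; lra);
    [left|right]; rewrite rsub0; auto.
Qed.

Definition Pgood : nprogram A := fun r =>
  forall x, is_weight_atom x -> occurs_in_rule x r -> goodA cs x.

Lemma elem_not_weight (c : rule_elem A) : ~ is_weight_atom (nbelem_atom (elem_emb c)).
Proof. destruct c as [l|l]; destruct l; simpl; intros [w [S [H|H]]]; discriminate. Qed.

Lemma lit_not_weight (l : literal A) : ~ is_weight_atom (nlit_atom (lit_emb l)).
Proof. destruct l; simpl; intros [w [S [H|H]]]; discriminate. Qed.

Lemma qnot_not_weight (l : literal A) : ~ is_weight_atom (QNot l).
Proof. intros [w [S [H|H]]]; discriminate. Qed.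

Lemma nn_body_good Cs b : (forall C, In C Cs -> In C cs) ->
  In b (nn_body Cs) -> goodA cs (nbelem_atom b).
Proof.
  intros HCs Hb. unfold nn_body in Hb. apply in_flat_map in Hb as [C [HC Hb]].
  destruct (good_root C (HCs C HC)) as [G1 G2].
  simpl in Hb. destruct Hb as [<-|[<-|[]]]; simpl; auto.
Qed.

Lemma Pgood_closed : closed_prog Pgood.
Proof.
  split.
  - intros w S [r [Pr Hocc]].
    assert (G : goodA cs (QLe w S)) by (apply Pr; auto; exists w, S; auto).
    split.
    + intros _ x Hx Ho. destruct Ho as [[l [Hl Hla]] | [b [Hb _]]].
      * simpl in Hl. injection Hl as <-. simpl in Hla. subst; auto.
      * simpl in Hb; contradiction.
    + intros S' c wm HS _ _. split.
      * intros x Hx Ho. destruct Ho as [[l [Hl Hla]] | [b [Hb Hba]]].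
        -- simpl in Hl. injection Hl as <-. simpl in Hla. subst; auto.
        -- simpl in Hb. destruct Hb as [<-|[]]. simpl in Hba. subst.
           eapply good_step_same; eauto.
      * intros x Hx Ho. destruct Ho as [[l [Hl Hla]] | [b [Hb Hba]]].
        -- simpl in Hl. injection Hl as <-. simpl in Hla. subst; auto.
        -- simpl in Hb. destruct Hb as [<-|[<-|[]]].
           ++ subst. exfalso; eapply elem_not_weight; eauto.
           ++ simpl in Hba. subst. eapply good_step; eauto.
  - intros w S [r [Pr Hocc]].
    assert (G : goodA cs (QLt w S)) by (apply Pr; auto; exists w, S; auto).
    split.
    + intros _ x Hx Ho. destruct Ho as [[l [Hl Hla]] | [b [Hb _]]].
      * simpl in Hl. injection Hl as <-. simpl in Hla. subst; auto.
      * simpl in Hb; contradiction.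
    + intros S' c wm HS _ _. split.
      * intros x Hx Ho. destruct Ho as [[l [Hl Hla]] | [b [Hb Hba]]].
        -- simpl in Hl. injection Hl as <-. simpl in Hla. subst; auto.
        -- simpl in Hb. destruct Hb as [<-|[]]. simpl in Hba. subst.
           eapply good_step_same_lt; eauto.
      * intros x Hx Ho. destruct Ho as [[l [Hl Hla]] | [b [Hb Hba]]].
        -- simpl in Hl. injection Hl as <-. simpl in Hla. subst; auto.
        -- simpl in Hb. destruct Hb as [<-|[<-|[]]].
           ++ subst. exfalso; eapply elem_not_weight; eauto.
           ++ simpl in Hba. subst. eapply good_step_lt; eauto.
Qed.

Lemma base_Pgood r : base_rules Om r -> Pgood r.
Proof.
  intros [rw [Hrw H]] x Hx Ho. simpl in H.
  assert (HB : forall C, In C (wr_body rw) -> In C cs)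
    by (intros C HC; apply Hcs; exists rw; auto).
  assert (H0 : In (wr_head rw) cs) by (apply Hcs; exists rw; auto).
  destruct (good_root (wr_head rw) H0) as [G1 G2].
  destruct H as [[l [wl [_ [-> | ->]]]] | [-> | ->]];
    destruct Ho as [[l' [Hl Hla]] | [b [Hb Hba]]]; simpl in *.
  - injection Hl as <-. simpl in Hla. subst. exfalso; eapply qnot_not_weight; eauto.
  - destruct Hb as [<-|[]]. simpl in Hba. subst. exfalso; eapply lit_not_weight; eauto.
  - injection Hl as <-. subst. exfalso; eapply lit_not_weight; eauto.
  - destruct Hb as [<-|Hb].
    + simpl in Hba; subst. exfalso; eapply qnot_not_weight; eauto.
    + subst. apply nn_body_good with (wr_body rw); auto.
  - discriminate.
  - destruct Hb as [<-|Hb].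
    + simpl in Hba; subst. auto.
    + subst. apply nn_body_good with (wr_body rw); auto.
  - discriminate.
  - destruct Hb as [<-|Hb].
    + simpl in Hba; subst. auto.
    + subst. apply nn_body_good with (wr_body rw); auto.
Qed.

End S.

Definition Nw (A : Type) (C : wconstraint A) : nat := Z.to_nat (up (cWeight C)).

Definition gC (A : Type) (C : wconstraint A) : list (natom A) :=
  flat_map (fun k => flat_map (fun j =>
     [QLe (rsub (wc_lo C) j) (firstn k (wc_expr C));
      QLt (rsub (wc_hi C) j) (firstn k (wc_expr C))])
     (seq 0 (Nw C + 1))) (seq 0 (length (wc_expr C) + 1)).

Lemma len_flat_map_const (X Y : Type) (f : X -> list Y) a l :
  (forall x, length (f x) = a) -> length (flat_map f l) = (length l * a)%nat.
Proof. intros H; induction l; simpl; auto. rewrite length_app, H, IHl. lia. Qed.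

Lemma len_gC A (C : wconstraint A) :
  length (gC C) = ((length (wc_expr C) + 1) * ((Nw C + 1) * 2))%nat.
Proof.
  unfold gC. rewrite (@len_flat_map_const _ _ _ ((Nw C + 1) * 2)%nat); rewrite ?length_seq; auto.
  intros k. rewrite (@len_flat_map_const _ _ _ 2%nat); rewrite ?length_seq; auto.
Qed.

Lemma Nw_bound A (C : wconstraint A) : 0 <= cWeight C -> INR (Nw C) <= cWeight C + 1.
Proof.
  intros H. unfold Nw. destruct (archimed (cWeight C)) as [H1 H2].
  assert (0 <= up (cWeight C))%Z by (apply le_IZR; lra).
  rewrite INR_IZR_INZ, Z2Nat.id; auto. lra.
Qed.

Lemma sum_bound A (cs : list (wconstraint A)) :
  (forall C, In C cs -> 0 <= cWeight C) ->
  INR (length (flat_map (@gC A) cs)) <=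
  4 * fold_right (fun C acc => (INR (cLen C) + 1) * (cWeight C + 1) + acc) 0 cs.
Proof.
  induction cs as [|C cs IH]; intros H; simpl; [lra|].
  rewrite length_app, plus_INR, len_gC.
  assert (IH' := IH (fun C' HC' => H C' (or_intror HC'))).
  assert (HW := H C (or_introl eq_refl)).
  assert (HN := Nw_bound C HW).
  rewrite !mult_INR, !plus_INR. change (INR 1) with 1. change (INR 2) with (1+1).
  change (length (wc_expr C)) with (cLen C). simpl fold_right.
  assert (0 <= INR (cLen C)) by apply pos_INR.
  assert (0 <= INR (Nw C)) by apply pos_INR.
  assert ((INR (Nw C) + 1) * 2 <= 4 * (cWeight C + 1)) by lra.
  assert ((INR (cLen C) + 1) * ((INR (Nw C) + 1) * 2) <=
          (INR (cLen C) + 1) * (4 * (cWeight C + 1))).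
  { apply Rmult_le_compat_l; lra. }
  lra.
Qed.

Theorem proposition3 :
  exists K : R,
  forall (A : Type) (Om : wprogram A),
    (* weights are nonnegative integers *)
    (forall C, occurs_constraint Om C ->
       forall c w, In (c, w) (wc_expr C) -> 0 <= w /\ exists z : Z, w = IZR z) ->
    (* cs enumerates, without repetition, the weight constraints occurring in Om *)
    forall cs : list (wconstraint A),
      NoDup cs -> (forall C, In C cs <-> occurs_constraint Om C) ->
      (* the weight atoms occurring in [Om]^nn are at most K * sum ... many *)
      exists s : list (natom A),
        (forall x, is_weight_atom x -> occurs_in_prog x (nn_translation Om) -> In x s) /\
        INR (length s) <=
          K * fold_right (fun C acc => (INR (cLen C) + 1) * (cWeight C + 1) + acc) 0 cs.
Proof.
  exists 4. intros A Om Hw cs _ Hcs.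
  assert (Hnn : forall C, In C cs -> forall p, In p (wc_expr C) -> 0 <= snd p).
  { intros C HC [c w] Hp. apply (Hw C (proj1 (Hcs C) HC) c w Hp). }
  exists (flat_map (@gC A) cs). split.
  - intros x Hx [r [Hr Ho]].
    assert (G : goodA cs x).
    { apply (Hr (Pgood cs) (Pgood_closed cs Hw Hcs) (base_Pgood cs Hcs)); auto. }
    destruct G as [C [S [S'' [j [HC [HE [Hj Hx']]]]]]].
    apply in_flat_map. exists C. split; auto.
    unfold gC. apply in_flat_map. exists (length S). split.
    + apply in_seq. rewrite <- HE, length_app. lia.
    + apply in_flat_map. exists j. split.
      * apply in_seq. split; [lia|].
        assert (W1 : wsum S'' <= cWeight C).
        { unfold cWeight. rewrite <- HE, wsum_app.
          assert (0 <= wsum S); [|lra].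
          apply wsum_nonneg. intros p Hp. apply (Hnn C HC). rewrite <- HE. apply in_or_app; auto. }
        destruct (archimed (cWeight C)) as [H1 _].
        assert (Z.of_nat j < up (cWeight C))%Z.
        { apply lt_IZR. rewrite <- INR_IZR_INZ. lra. }
        unfold Nw. lia.
      * assert (Hf : firstn (length S) (wc_expr C) = S).
        { rewrite <- HE, firstn_app, firstn_all, Nat.sub_diag. simpl. apply app_nil_r. }
        rewrite Hf. simpl. destruct Hx' as [->| ->]; auto.
  - apply sum_bound. intros C HC. apply wsum_nonneg. apply (Hnn C HC).
Qed.
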